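(* Let $k\in\mathbb{Z}$ and let $p,s$ be positive integers with $s<p$. Then $$\sum_{\nu=0}^{p}\binom{p-\nu+1}{s}\binom{p}{\nu}E_{\nu}^{(k)}=\binom{p}{s}E_{p-s}^{(k)}(1)+\binom{p}{s-1}E_{p-s+1}^{(k)}(1).$$
   Context: For $k\in\mathbb{Z}$, $\mathrm{Ei}_k(x)=\sum_{n=1}^{\infty}\frac{x^n}{n^k(n-1)!}$; the poly-Genocchi polynomials $G_n^{(k)}(x)$ are defined by $\frac{2\,\mathrm{Ei}_k(\log(1+t))}{e^t+1}e^{xt}=\sum_{n=0}^{\infty}G_n^{(k)}(x)\frac{t^n}{n!}$; the poly-Euler polynomials are $E_n^{(k)}(x)=\frac{G_{n+1}^{(k)}(x)}{n+1}$ ($n\ge0$), and $E_n^{(k)}=E_n^{(k)}(0)$. *)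

(* Defs.v *)
From mathcomp Require Import all_boot all_order all_algebra.
Set Implicit Arguments. Unset Strict Implicit. Unset Printing Implicit Defensive.
Import Order.TTheory GRing.Theory Num.Theory.
Local Open Scope ring_scope.

Definition fps := nat -> rat.

Definition fone : fps := fun n => (n == 0%N)%:R.

Definition fmul (a b : fps) : fps :=
  fun n => \sum_(i < n.+1) a i * b (n - i)%N.

Definition fpow (a : fps) (m : nat) : fps := iter m (fmul a) fone.

Definition fexp (x : rat) : fps := fun n => x ^+ n / (n`!)%:R.

Definition flog1p : fps :=
  fun n => if n is n'.+1 then (-1) ^+ n' / (n'.+1)%:R else 0.

Fixpoint finv_seq (c : fps) (n : nat) : seq rat :=
  if n is n'.+1 then
    let s := finv_seq c n' in
    rcons s (- (c 0%N)^-1 * \sum_(1 <= i < n.+1) c i * nth 0 s (n - i)%N)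
  else [:: (c 0%N)^-1].
Definition finv (c : fps) : fps := fun n => nth 0 (finv_seq c n) n.

(* Ei_k(f) = sum_{m>=1} f^m / (m^k (m-1)!), for a series f with f 0 = 0
   (so only m <= n contributes to the coefficient of t^n). *)
Definition Ei_comp (k : int) (f : fps) : fps :=
  fun n => \sum_(1 <= m < n.+1) fpow f m n / ((m%:R : rat) ^ k * ((m.-1)`!)%:R).

Definition two_over_expp1 : fps :=
  fun n => 2 * finv (fun j => fexp 1 j + (j == 0%N)%:R) n.

(* poly-Genocchi polynomial G_n^{(k)}(x): n! times the t^n-coefficient of
   2 Ei_k(log(1+t)) / (e^t+1) * e^{xt} *)
Definition polyGenocchi (n : nat) (k : int) (x : rat) : rat :=
  (n`!)%:R * fmul (fmul (Ei_comp k flog1p) two_over_expp1) (fexp x) n.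

Definition polyEuler (n : nat) (k : int) (x : rat) : rat :=
  polyGenocchi n.+1 k x / (n.+1)%:R.

(* Main.v *)
Require Import Defs.
From mathcomp Require Import all_boot all_order all_algebra.
From mathcomp Require Import zify ring lra.
Import Order.TTheory GRing.Theory Num.Theory.
Local Open Scope ring_scope.

Section N.
Local Open Scope nat_scope.
Lemma binC2 m a b : ('C(m, a) * 'C(m - a, b) = 'C(m, b) * 'C(m - b, a))%N.
Proof.
case: (leqP (a + b) m) => H.
  apply/eqP; rewrite -(eqn_pmul2r (_ : 0 < a`! * b`! * (m - a - b)`!)%N);
    last by rewrite !muln_gt0 !fact_gt0.
  have E1 : ('C(m, a) * 'C(m - a, b) * (a`! * b`! * (m - a - b)`!) = m`!)%N.
    rewrite -(bin_fact (_ : a <= m)); last by lia.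
    rewrite -(bin_fact (_ : b <= m - a)); last by lia.
    ring.
  have E2 : ('C(m, b) * 'C(m - b, a) * (a`! * b`! * (m - a - b)`!) = m`!)%N.
    rewrite -(bin_fact (_ : b <= m)); last by lia.
    rewrite -(bin_fact (_ : a <= m - b)); last by lia.
    rewrite (_ : (m - b - a) = (m - a - b))%N; last by lia. ring.
  by rewrite E1 E2.
case: (leqP a m) => Ha; case: (leqP b m) => Hb.
- have Ha' : m - a < b by lia.
  have Hb' : m - b < a by lia.
  by rewrite [X in _ * X]bin_small // [X in _ = _ * X]bin_small // !muln0.
- have Ha' : m - a < b by lia.
  by rewrite [X in _ * X]bin_small // [X in _ = X * _]bin_small // muln0.
- have Hb' : m - b < a by lia.
  by rewrite [X in X * _]bin_small // [X in _ = _ * X]bin_small // muln0.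
- by rewrite [X in X * _]bin_small // [X in _ = X * _]bin_small.
Qed.
End N.

Section S.
Variable k : int.
Definition C := fmul (Ei_comp k flog1p) two_over_expp1.
Definition e (j : nat) : rat := (j`!)%:R * C j.+1.

Lemma C0 : C 0%N = 0.
Proof.
rewrite /C /fmul ?big_ord1 /= /Ei_comp.
by rewrite ?big_ord1 /= big_geq // !mul0r.
Qed.

Lemma E0 n : polyEuler n k 0 = e n.
Proof.
rewrite /polyEuler /polyGenocchi -/C /fmul /fexp big_ord_recr /= big1.
  rewrite subnn expr0 fact0 divr1 ?mulr1 add0r /e factS natrM.
  have H : (n.+1)%:R != 0 :> rat by rewrite pnatr_eq0.
  by field; rewrite addrC natr1.
move=> i _; rewrite expr0n /=.
have -> : ((n.+1 - i) == 0)%N = false by have := ltn_ord i; lia.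
by rewrite mul0r mulr0.
Qed.

Lemma E1 n : polyEuler n k 1 = \sum_(j < n.+1) ('C(n, j))%:R * e j.
Proof.
rewrite /polyEuler /polyGenocchi -/C /fmul /fexp big_ord_recl /= C0 mul0r add0r.
rewrite factS natrM.
have H : (n.+1)%:R != 0 :> rat by rewrite pnatr_eq0.
rewrite (_ : forall a b : rat, (n.+1)%:R * a * b / (n.+1)%:R = a * b);
  last by move=> a b; field; rewrite addrC natr1.
rewrite mulr_sumr; apply: eq_bigr => i _.
rewrite expr1n /e /bump /= add1n subSS.
have Hi : (i <= n)%N by have := ltn_ord i; lia.
rewrite -(bin_fact Hi) !natrM.
have Hf : ((n - i)`!)%:R != 0 :> rat by rewrite pnatr_eq0 -lt0n fact_gt0.
by field.
Qed.

End S.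

Theorem lemma8 (k : int) (p s : nat) (hs : (0 < s)%N) (hsp : (s < p)%N) :
  \sum_(0 <= nu < p.+1)
     ('C(p - nu + 1, s))%:R * ('C(p, nu))%:R * polyEuler nu k 0
  = ('C(p, s))%:R * polyEuler (p - s) k 1
    + ('C(p, s.-1))%:R * polyEuler (p - s + 1) k 1.
Proof.
rewrite !E1.
have ext : forall m, (m <= p)%N -> \sum_(j < m.+1) ('C(m, j))%:R * e k j
   = \sum_(0 <= j < p.+1) ('C(m, j))%:R * e k j.
  move=> m Hm; rewrite -(big_mkord xpredT (fun j => ('C(m, j))%:R * e k j)).
  rewrite [RHS](@big_cat_nat _ _ _ m.+1) //=.
  rewrite [X in _ + X]big1_seq ?addr0 // => j /andP [_].
  by rewrite mem_index_iota => /andP [Hj _]; rewrite bin_small // mul0r.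
rewrite ext ?leq_subr // ext; last by lia.
rewrite !mulr_sumr -big_split /=.
apply: eq_big_nat => nu /andP [_ Hnu].
rewrite E0 !mulrA -mulrDl; congr (_ * _).
case: s hs hsp => // s' _ Hs.
rewrite -!natrM -natrD; congr (_%:R).
rewrite /= (_ : (p - s'.+1 + 1 = p - s')%N); last by lia.
rewrite binC2 (binC2 p s' nu) addn1 binS.
ring.
Qed.
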